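(* Let $k\ge 1$ and $s\ge 1$ be integers with $s\le k$, and let $t$ be an integer. Then $$k\,\sigma_{k}^{(0)}(t;s)=\sum_{d\mid k}d\,\sigma^{(1)}_{d}(t;s),$$ with the convention $\sigma^{(1)}_{d}(t;s)=0$ if $s>d$. Equivalently, by Möbius inversion, $$k\,\sigma_{k}^{(1)}(t;s)=\sum_{d\mid k}\mu\!\left(\frac{k}{d}\right)d\,\sigma_{d}^{(0)}(t;s),$$ with the analogous convention $\sigma^{(0)}_d(t;s)=0$ if $s>d$.
   Context: For a positive integer $m$, $(q)_m=(1-q)\cdots(1-q^m)$, $(q)_0=1$. For integers $b\ge 0$, $n\ge1$ and $1\le s\le n$, let $R^{(b)}_{n,s}(q)=\sum_{t=0}^{n-1}\sigma^{(b)}_n(t;s)q^t$ be the remainder of $\frac{1}{n^b}(q)_{n-1}^{\,b}(q)_{s-1}$ upon division by $1-q^n$; the values $\sigma^{(b)}_n(t;s)$ are extended to all integers $t$ by $n$-periodicity. $\mu$ is the Möbius function. *)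

(* Defs.v *)
From HB Require Import structures.
From mathcomp Require Import all_boot all_order all_algebra.
Set Implicit Arguments. Unset Strict Implicit. Unset Printing Implicit Defensive.
Import Order.TTheory GRing.Theory Num.Theory.
Local Open Scope ring_scope.

Definition qpoch (m : nat) : {poly rat} := \prod_(1 <= j < m.+1) (1 - 'X^j).

Definition Rrem (b n s : nat) : {poly rat} :=
  ((n%:R ^+ b)^-1 *: (qpoch n.-1 ^+ b * qpoch s.-1)) %% (1 - 'X^n).

Definition sigma (b n : nat) (t : int) (s : nat) : rat :=
  (Rrem b n s)`_(`|(t %% n%:Z)%Z|%N).

Definition sigmac (b d : nat) (t : int) (s : nat) : rat :=
  if (s <= d)%N then sigma b d t s else 0.

Definition moebius (n : nat) : int :=
  if n == 0%N then 0
  else if all (fun p => logn p n == 1%N) (primes n) then (-1) ^+ size (primes n)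
  else 0.

(* Main.v *)
Require Import Defs.
From HB Require Import structures.
From mathcomp Require Import all_boot all_order all_algebra all_field.
From mathcomp Require Import zify ring.
Set Implicit Arguments. Unset Strict Implicit. Unset Printing Implicit Defensive.
Import Order.TTheory GRing.Theory Num.Theory.
Local Open Scope ring_scope.

Lemma exprz_root (x : algC) n (t : int) : (0 < n)%N -> x ^+ n = 1 ->
  x ^ (- t) = x ^+ (n - `|(t %% n%:Z)%Z|%N).
Proof.
move=> n0 xn.
have x0 : x != 0 by apply: contra_eq_neq xn => ->; rewrite expr0n gtn_eqF // eq_sym oner_eq0.
have nz : (n%:Z) != 0 by case: (n) n0.
set r := (t %% n%:Z)%Z.
have r0 : 0 <= r by apply: modz_ge0.
have rn : (`|r|%N < n)%N.
  have := ltz_mod t nz; rewrite -(gez0_abs r0) /=. lia.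
have xr : x ^ t = x ^+ `|r|%N.
  rewrite {1}(divz_eq t n%:Z) [((t %/ n%:Z)%Z * _)]mulrC expfzDr // -exprz_exp.
  have -> : x ^ (n%:Z) = 1 by rewrite -xn.
  by rewrite exp1rz mul1r -/r -{1}(gez0_abs r0).
rewrite -invr_expz xr; apply: (mulIf (expf_neq0 `|r|%N x0)).
by rewrite mulVf ?expf_neq0 // -exprD subnK ?xn // ltnW.
Qed.

Lemma orth_sum (z : algC) n m : n.-primitive_root z ->
  \sum_(i < n) (z ^+ m) ^+ i = if (n %| m)%N then n%:R else 0.
Proof.
move=> pz; rewrite (prim_order_dvd pz); case: eqP => [->|ne].
  by under eq_bigr do rewrite expr1n; rewrite sumr_const card_ord.
apply/eqP; have : (z ^+ m - 1) != 0 by rewrite subr_eq0; apply/eqP.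
move=> nz; rewrite -(mulrI_eq0 _ (mulfI nz)) -subrX1 exprAC (prim_expr_order pz).
by rewrite expr1n subrr.
Qed.

Lemma Q_neq0 n : (0 < n)%N -> (1 - 'X^n : {poly rat}) != 0.
Proof.
move=> n0; apply/eqP => H; have := congr1 (fun p : {poly rat} => p`_0) H.
by rewrite coefB coef1 coefXn eqxx (ltn_eqF n0) subr0 coef0 => /eqP; rewrite oner_eq0.
Qed.

Lemma size_Q n : (0 < n)%N -> size (1 - 'X^n : {poly rat}) = n.+1.
Proof.
by move=> n0; rewrite -opprB size_polyN size_XnsubC.
Qed.

Lemma coef_mod_roots (P : {poly rat}) n (z : algC) (t : int) : n.-primitive_root z ->
  n%:R * ratr ((P %% (1 - 'X^n))`_(`|(t %% n%:Z)%Z|%N)) =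
  \sum_(i < n) (z ^+ i) ^ (- t) * (map_poly ratr P).[z ^+ i].
Proof.
move=> pz; have n0 := prim_order_gt0 pz.
set Q := 1 - 'X^n; set R := P %% Q; set r := `|(t %% n%:Z)%Z|%N.
have nz : (n%:Z) != 0 by case: (n) n0.
have rn : (r < n)%N.
  have := ltz_mod t nz; have := modz_ge0 t nz; rewrite /r. lia.
have zin i : (z ^+ i) ^+ n = 1 by rewrite exprAC (prim_expr_order pz) expr1n.
have E i : (z ^+ i) ^ (- t) * (map_poly ratr P).[z ^+ i] =
   \sum_(j < n) ratr R`_j * (z ^+ (j + (n - r))) ^+ i.
  rewrite (exprz_root t n0 (zin i)) -/r.
  rewrite {1}(divp_eq P Q) rmorphD rmorphM /= hornerD hornerM.
  have -> : (map_poly ratr Q).[z ^+ i] = 0.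
    by rewrite /Q rmorphB rmorph1 rmorphXn /= map_polyX !hornerE zin subrr.
  rewrite mulr0 add0r (horner_coef_wide _ (n:=n)); last first.
    by rewrite size_map_poly -ltnS -(size_Q n0) ltn_modp Q_neq0.
  rewrite mulr_sumr; apply: eq_bigr => j _.
  by rewrite coef_map /= mulrCA -exprD -!exprM addnC mulnC.
under eq_bigr do rewrite E.
rewrite exchange_big /=.
under eq_bigr do rewrite -mulr_sumr (orth_sum _ pz).
rewrite (bigD1 (Ordinal rn)) //= big1 ?addr0; first last.
  move=> j /eqP jr.
  have -> : (n %| j + (n - r))%N = false.
    apply/negP => /dvdnP [q Hq]; apply: jr; apply: val_inj => /=.
    have jn := ltn_ord j; case: q Hq => [|[|q]] Hq; nia.
  by rewrite mulr0.
have -> : (n %| r + (n - r))%N by rewrite subnKC ?dvdnn // ltnW.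
by rewrite mulrC.
Qed.

Lemma qpoch_eval m (x : algC) :
  (map_poly ratr (qpoch m)).[x] = \prod_(1 <= j < m.+1) (1 - x ^+ j).
Proof.
rewrite /qpoch rmorph_prod horner_prod; apply: eq_bigr => j _.
by rewrite rmorphB rmorph1 rmorphXn /= map_polyX !hornerE.
Qed.

Lemma qpoch_root0 m e (x : algC) : (1 <= e <= m)%N -> x ^+ e = 1 ->
  \prod_(1 <= j < m.+1) (1 - x ^+ j) = 0.
Proof.
move=> em xe; rewrite (bigD1_seq e) ?mem_index_iota ?iota_uniq //=.
  by rewrite xe subrr mul0r.
Qed.

Lemma qpoch_prim d (y : algC) : d.-primitive_root y ->
  \prod_(1 <= j < d) (1 - y ^+ j) = d%:R.
Proof.
move=> py; have d0 := prim_order_gt0 py.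
have H := factor_Xn_sub_1 py.
rewrite big_ltn // expr0 subrX1 in H.
have nz : ('X - 1%:P : {poly algC}) != 0 by rewrite polyXsubC_eq0.
rewrite -[in RHS]polyC1 in H.
have H2 := mulfI nz H.
have := congr1 (fun p : {poly algC} => p.[1]) H2.
rewrite /= horner_prod horner_sum.
under eq_bigr do rewrite hornerXsubC.
move=> ->; under eq_bigr do rewrite hornerXn expr1n.
by rewrite sumr_const card_ord.
Qed.

Lemma qpoch_noncop d j (w : algC) : d.-primitive_root w -> (j < d)%N -> ~~ coprime j d ->
  \prod_(1 <= m < d.-1.+1) (1 - (w ^+ j) ^+ m) = 0.
Proof.
move=> pw jd njd; have d0 := prim_order_gt0 pw.
set g := gcdn j d.
have g0 : (0 < g)%N by rewrite gcdn_gt0 d0 orbT.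
have g1 : (1 < g)%N by move: njd; rewrite /coprime -/g; case: g g0 => [|[|]].
have gd : (g %| d)%N by apply: dvdn_gcdr.
have gj : (g %| j)%N by apply: dvdn_gcdl.
apply: (qpoch_root0 (e := (d %/ g)%N)).
  have e0 : (0 < d %/ g)%N by rewrite divn_gt0 //; apply: dvdn_leq.
  have ed : (d %/ g < d)%N by apply: ltn_Pdiv.
  by apply/andP; split => //; lia.
rewrite -exprM muln_divA // -divn_mulAC // mulnC exprM (prim_expr_order pw).
by rewrite expr1n.
Qed.

Section Facts.
Variables (s : nat) (t : int).
Definition Hf (x : algC) := x ^ (- t) * (map_poly ratr (qpoch s.-1)).[x].

Lemma factA d (w : algC) : d.-primitive_root w ->
  ratr (d%:R * sigma 0 d t s) = \sum_(j < d) Hf (w ^+ j).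
Proof.
move=> pw; rewrite /sigma /Rrem expr0 invr1 scale1r mul1r rmorphM rmorph_nat.
by rewrite (coef_mod_roots _ _ pw).
Qed.

Lemma Hf0 d (w : algC) j : d.-primitive_root w -> (s <= d)%N = false -> Hf (w ^+ j) = 0.
Proof.
move=> pw sd; have d0 := prim_order_gt0 pw.
rewrite /Hf qpoch_eval (qpoch_root0 (e := d)) ?mulr0 //.
  by apply/andP; split => //; move/negbT: sd; rewrite -ltnNge; lia.
by rewrite exprAC (prim_expr_order pw) expr1n.
Qed.

Lemma factAc d (w : algC) : d.-primitive_root w ->
  ratr (d%:R * sigmac 0 d t s) = \sum_(j < d) Hf (w ^+ j).
Proof.
move=> pw; rewrite /sigmac; case: ifP => sd; first exact: factA.
by rewrite mulr0 rmorph0 big1 // => j _; rewrite (Hf0 _ pw).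
Qed.

Lemma factBc d (w : algC) : d.-primitive_root w ->
  ratr (d%:R * sigmac 1 d t s) = \sum_(j < d | coprime j d) Hf (w ^+ j).
Proof.
move=> pw; have d0 := prim_order_gt0 pw; rewrite /sigmac; case: ifP => sd; last first.
  by rewrite mulr0 rmorph0 big1 // => j _; rewrite (Hf0 _ pw).
have dnz : (d%:R : rat) != 0 by rewrite pnatr_eq0 -lt0n.
have dnzC : (d%:R : algC) != 0 by rewrite pnatr_eq0 -lt0n.
rewrite /sigma /Rrem expr1 modpZl coefZ mulrA mulfV // mul1r.
apply: (mulfI dnzC); rewrite (coef_mod_roots _ _ pw) mulr_sumr [RHS]big_mkcond /=.
apply: eq_bigr => j _; rewrite expr1 rmorphM hornerM qpoch_eval.
case: ifP => cj.
  rewrite prednK // qpoch_prim ?prim_root_exp_coprime //.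
  by rewrite /Hf mulrCA.
by rewrite qpoch_noncop ?cj // mul0r mulr0.
Qed.
End Facts.
Lemma sum_prim_partition (R : nmodType) n (z : algC) (F : algC -> R) :
  n.-primitive_root z ->
  \sum_(i < n) F (z ^+ i) =
  \sum_(d <- divisors n) \sum_(j < d | coprime j d) F ((z ^+ (n %/ d)) ^+ j).
Proof.
move=> prim_z; have n_gt0 := prim_order_gt0 prim_z.
have in_d d: (d %| n)%N -> val (@inord n d) = d by move/dvdn_leq/inordK=> /= ->.
have dv_n k: (n %/ gcdn k n %| n)%N.
  by rewrite -{3}(divnK (dvdn_gcdr k n)) dvdn_mulr.
have [uDn _ inDn] := divisors_correct n_gt0.
have defDn: divisors n = map val (map (@inord n) (divisors n)).
  by rewrite -map_comp map_id_in // => d; rewrite inDn => /in_d.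
rewrite defDn [RHS]big_map [RHS]big_uniq /=; last first.
  by rewrite -(map_inj_uniq val_inj) -defDn.
pose h (k : 'I_n) : 'I_n.+1 := inord (n %/ gcdn k n).
rewrite (partition_big h (dvdn^~ n)) /= => [|k _]; last by rewrite in_d ?dv_n.
apply: eq_big => d; first by rewrite -(mem_map val_inj) -defDn inDn.
set q := (n %/ d)%N => d_dv_n.
have [q_gt0 d_gt0]: (0 < q /\ 0 < d)%N by apply/andP; rewrite -muln_gt0 divnK.
have fP (k : 'I_d): (q * k < n)%N by rewrite divn_mulAC ?ltn_divLR ?ltn_pmul2l.
rewrite (reindex (fun k => Ordinal (fP k))); last first.
  have f'P (k : 'I_n): (k %/ q < d)%N by rewrite ltn_divLR // mulnC divnK.
  exists (fun k => Ordinal (f'P k)) => [k _ | k /eqnP/=].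
    by apply: val_inj; rewrite /= mulKn.
  rewrite in_d // => Dd; apply: val_inj; rewrite /= mulnC divnK // /q -Dd.
  by rewrite divnA ?mulKn ?dvdn_gcdl ?dvdn_gcdr.
apply: eq_big => k; rewrite ?exprM // -val_eqE in_d //=.
rewrite -eqn_mul ?dvdn_gcdr ?gcdn_gt0 ?n_gt0 ?orbT //.
rewrite -[n in gcdn _ n](divnK d_dv_n) -muln_gcdr mulnCA mulnA divnK //.
by rewrite mulnC eqn_mul // divnn n_gt0 eq_sym.
Qed.
Lemma mob1 : moebius 1 = 1.
Proof. reflexivity. Qed.

Lemma mob_sq p m : prime p -> (0 < m)%N -> (p * p %| m)%N -> moebius m = 0.
Proof.
move=> pp m0 pm; rewrite /moebius (gtn_eqF m0).
case: ifP => // /allP /(_ p); rewrite mem_primes pp m0 /=.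
have pm' : (p %| m)%N by apply: dvdn_trans pm; apply: dvdn_mulr.
move=> /(_ pm') /eqP H; move: pm; rewrite -(expn1 p) -expnSr.
by rewrite (pfactor_dvdn 2 pp m0) H.
Qed.

Lemma mob_pM p m : prime p -> (0 < m)%N -> ~~ (p %| m)%N ->
  moebius (p * m) = - moebius m.
Proof.
move=> pp m0 npm; have p0 := prime_gt0 pp.
have Hperm : perm_eq (primes (p * m)) (p :: primes m).
  apply: uniq_perm; first exact: primes_uniq.
    by rewrite /= primes_uniq mem_primes (negbTE npm) !andbF.
  move=> q; rewrite in_cons !mem_primes muln_gt0 p0 m0 /=.
  case: (boolP (prime q)) => /= pq.
    by rewrite (Euclid_dvdM _ _ pq) dvdn_prime2.
  by case: eqP => // qp; rewrite qp pp in pq.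
rewrite /moebius muln_eq0 !(gtn_eqF m0) (gtn_eqF p0) /=.
rewrite (perm_all _ Hperm) (perm_size Hperm) /= lognM // logn_prime // eqxx.
have -> : logn p m = 0%N.
  by apply/eqP; rewrite -leqn0 leqNgt logn_gt0 mem_primes pp m0 (negbTE npm).
have -> : all (fun q => logn q (p * m) == 1%N) (primes m) =
          all (fun q => logn q m == 1%N) (primes m).
  apply: eq_in_all => q; rewrite mem_primes => /and3P[pq _ qm].
  rewrite lognM // logn_prime //.
  case: (q =P p) => [qp|_]; last by rewrite add0n.
  by rewrite -qp qm in npm.
by rewrite /=; case: ifP => _; rewrite ?exprS ?mulN1r ?oppr0.
Qed.

Lemma divisors_gt0 n d : d \in divisors n -> (0 < d)%N.
Proof.
have [->|n0] := posnP n.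
  have -> : divisors 0 = [:: 1] by reflexivity.
  by rewrite inE => /eqP ->.
rewrite -dvdn_divisors //.
by case: d => //; rewrite dvd0n => /eqP H; rewrite H in n0.
Qed.

Lemma sum_div_ndvd (R : nmodType) (F : nat -> R) p n : prime p -> (0 < n)%N -> (p %| n)%N ->
  \sum_(d <- divisors n | ~~ (p %| d)%N) F d =
  \sum_(d <- divisors (n %/ p) | ~~ (p %| d)%N) F d.
Proof.
move=> pp n0 pn; have p0 := prime_gt0 pp.
have np0 : (0 < n %/ p)%N by rewrite divn_gt0 //; apply: dvdn_leq.
rewrite -[LHS]big_filter -[RHS]big_filter; apply: perm_big; apply: uniq_perm; rewrite ?filter_uniq ?divisors_uniq //.
move=> d; rewrite !mem_filter -!dvdn_divisors //.
case: (boolP (p %| d)%N) => //= npd.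
rewrite -{1}(divnK pn) Gauss_dvdl //.
by rewrite coprime_sym prime_coprime.
Qed.

Lemma sum_div_dvd (R : nmodType) (F : nat -> R) p n : (0 < p)%N -> (0 < n)%N -> (p %| n)%N ->
  \sum_(d <- divisors n | (p %| d)%N) F d =
  \sum_(e <- divisors (n %/ p)) F (p * e)%N.
Proof.
move=> p0 n0 pn.
have np0 : (0 < n %/ p)%N by rewrite divn_gt0 //; apply: dvdn_leq.
rewrite -big_filter -(big_map (muln p) xpredT).
apply: perm_big; apply: uniq_perm; rewrite ?filter_uniq ?divisors_uniq //.
  rewrite map_inj_uniq ?divisors_uniq //.
  by move=> a b /eqP; rewrite eqn_pmul2l // => /eqP.
move=> d; rewrite mem_filter -dvdn_divisors //.
apply/andP/mapP => [[pd dn]|[e]].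
  exists (d %/ p)%N; first by rewrite -dvdn_divisors // dvdn_divRL // divnK.
  by rewrite mulnC divnK.
rewrite -dvdn_divisors // dvdn_divRL // => en ->.
by rewrite dvdn_mulr // mulnC.
Qed.

Lemma mob_sum n : (0 < n)%N -> \sum_(d <- divisors n) moebius d = (n == 1%N)%:R.
Proof.
move=> n0; case: (ltngtP n 1) => [|n1|->]; first by rewrite ltnNge n0.
  set p := pdiv n; have pp : prime p by apply: pdiv_prime.
  have pn : (p %| n)%N by apply: pdiv_dvd.
  have p0 := prime_gt0 pp.
  have np0 : (0 < n %/ p)%N by rewrite divn_gt0 //; apply: dvdn_leq.
  rewrite (bigID (fun d => p %| d)%N) /= sum_div_dvd // sum_div_ndvd //.
  rewrite (bigID (fun d => p %| d)%N) /= big1_seq; last first.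
    move=> e /andP[pe ediv]; apply: (mob_sq pp).
      by rewrite muln_gt0 p0 (divisors_gt0 ediv).
    by rewrite dvdn_pmul2l.
  rewrite add0r -big_split /= big1_seq ?gtn_eqF //.
  move=> e /andP[pe ediv]; rewrite mob_pM // ?addNr //.
  exact: divisors_gt0 ediv.
have -> : divisors 1 = [:: 1] by reflexivity.
by rewrite big_cons big_nil mob1 addr0.
Qed.

Lemma sum_div_flip (R : nmodType) (F : nat -> R) K : (0 < K)%N ->
  \sum_(d <- divisors K) F (K %/ d)%N = \sum_(d <- divisors K) F d.
Proof.
move=> K0; rewrite -(big_map (fun d => K %/ d)%N xpredT).
have flip x : (x %| K)%N -> (K %/ (K %/ x))%N = x.
  move=> xK; have x0 : (0 < x)%N by apply: dvdn_gt0 xK.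
  have Kx0 : (0 < K %/ x)%N by rewrite divn_gt0 //; apply: dvdn_leq.
  by rewrite -{1}(divnK xK) mulKn.
apply: perm_big; apply: uniq_perm; rewrite ?divisors_uniq //.
  rewrite map_inj_in_uniq ?divisors_uniq //.
  move=> a b; rewrite -!dvdn_divisors // => aK bK eq.
  by rewrite -(flip a aK) eq flip.
move=> x; apply/mapP/idP => [[d]|xK].
  rewrite -!dvdn_divisors // => dK ->.
  by apply: dvdn_div.
exists (K %/ x)%N; last by rewrite flip // dvdn_divisors.
by rewrite -dvdn_divisors // dvdn_div // dvdn_divisors.
Qed.

Lemma mob_inv (B : nat -> algC) k : (0 < k)%N ->
  \sum_(d <- divisors k) (moebius (k %/ d))%:~R * \sum_(e <- divisors d) B e = B k.
Proof.
move=> k0.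
have E1 d : d \in divisors k -> \sum_(e <- divisors d) B e =
   \sum_(e <- divisors k) (if (e %| d)%N then B e else 0).
  rewrite -dvdn_divisors // => dk; have d0 : (0 < d)%N by apply: dvdn_gt0 dk.
  rewrite -big_mkcond /= -[RHS]big_filter; apply: perm_big; apply: uniq_perm; rewrite ?filter_uniq ?divisors_uniq //.
  move=> e; rewrite mem_filter -!dvdn_divisors //.
  by case: (boolP (e %| d)%N) => //= ed; rewrite (dvdn_trans ed dk).
under eq_big_seq => d dk do rewrite (E1 d dk) mulr_sumr.
rewrite exchange_big /=.
rewrite (bigD1_seq k) ?divisors_id ?divisors_uniq //= [X in _ + X]big1_seq ?addr0; last first.
  move=> e /andP[ek ediv].
  transitivity (B e * \sum_(d <- divisors k | (e %| d)%N) (moebius (k %/ d))%:~R).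
    rewrite mulr_sumr [RHS]big_mkcond /=; apply: eq_bigr => d _.
    by case: ifP => _; rewrite ?mulr0 // mulrC.
  have e0 := divisors_gt0 ediv.
  move: ediv; rewrite -dvdn_divisors // => ek'.
  rewrite sum_div_dvd //.
  under eq_bigr => d _ do rewrite divnMA.
  rewrite (sum_div_flip (fun d => (moebius d)%:~R)); last by rewrite divn_gt0 //; apply: dvdn_leq.
  rewrite -rmorph_sum /= mob_sum; last by rewrite divn_gt0 //; apply: dvdn_leq.
  case: eqP => [H|]; last by rewrite mulr0.
  by move: ek; rewrite -{1}(divnK ek') H mul1n eqxx.
transitivity (B k * \sum_(d <- divisors k | (k %| d)%N) (moebius (k %/ d))%:~R).
  rewrite mulr_sumr [RHS]big_mkcond /=; apply: eq_bigr => d _.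
  by case: ifP => _; rewrite ?mulr0 // mulrC.
rewrite sum_div_dvd // divnn k0.
have -> : divisors 1 = [:: 1] by reflexivity.
by rewrite big_cons big_nil muln1 divnn k0 mob1 addr0 mulr1.
Qed.

Lemma ratrC_inj (a b : rat) : (ratr a : algC) = ratr b -> a = b.
Proof. exact: (fmorph_inj (ratr : {rmorphism rat -> algC})). Qed.

Theorem proposition2p11 (k s : nat) (t : int) :
  (1 <= s)%N -> (s <= k)%N ->
  k%:R * sigma 0 k t s = \sum_(d <- divisors k) d%:R * sigmac 1 d t s /\
  k%:R * sigma 1 k t s
    = \sum_(d <- divisors k) (moebius (k %/ d))%:~R * d%:R * sigmac 0 d t s.
Proof.
move=> s1 sk; have k0 : (0 < k)%N by apply: leq_trans sk.
have [z pz] := C_prim_root_exists k0.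
have pw d : d \in divisors k -> d.-primitive_root (z ^+ (k %/ d)).
  by rewrite -dvdn_divisors // => dk; apply: dvdn_prim_root.
set B := fun d => \sum_(j < d | coprime j d) Hf s t ((z ^+ (k %/ d)) ^+ j).
split; apply: ratrC_inj.
  rewrite (@factA s t _ _ pz) rmorph_sum /= (sum_prim_partition _ pz).
  by apply: eq_big_seq => d dk; rewrite (@factBc s t _ _ (pw d dk)).
have -> : sigma 1 k t s = sigmac 1 k t s by rewrite /sigmac sk.
have pk : k.-primitive_root (z ^+ (k %/ k)) by rewrite divnn k0 expr1.
rewrite (@factBc s t _ _ pk) -/(B k) -(mob_inv B k0) rmorph_sum /=.
apply: eq_big_seq => d dk; rewrite -mulrA rmorphM rmorph_int; congr (_ * _).
symmetry; etransitivity; first exact: (@factAc s t _ _ (pw d dk)).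
rewrite (sum_prim_partition _ (pw d dk)).
have dk' : (d %| k)%N by rewrite dvdn_divisors.
apply: eq_big_seq => e ed; have ed' : (e %| d)%N by rewrite dvdn_divisors // (divisors_gt0 dk).
rewrite /B -exprM; congr (\sum_(j < e | _) Hf s t (z ^+ _ ^+ j)).
by rewrite muln_divA // divnK.
Qed.
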